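(* Let $\mathbf C$ and $\mathbf D$ be categories given by presentations (generators and relations) which are cliques. Let $O_{\mathbf C}$ be a nonempty set of objects of $\mathbf C$ and $G_{\mathbf C}$ a set of generators of $\mathbf C$ between objects of $O_{\mathbf C}$, and similarly $O_{\mathbf D}$, $G_{\mathbf D}$ for $\mathbf D$. Let $\alpha:O_{\mathbf C}\to O_{\mathbf D}$ and $\beta:G_{\mathbf C}\to G_{\mathbf D}$ be compatible bijections (if $g:a\to b$ then $\beta(g):\alpha(a)\to\alpha(b)$). Suppose the subcategory of $\mathbf D$ with objects $O_{\mathbf D}$ generated by $G_{\mathbf D}$ is a full subcategory of $\mathbf D$. Then the category $G(\alpha,\beta)$ is a clique.
   Context: A clique (abstract clique) is a category with a nonempty set of objects and exactly one morphism between each ordered pair of objects (equivalently a nonempty connected thin groupoid). $G(\alpha,\beta)$ is the category presented as follows: its objects are the pushout of the object sets of $\mathbf C$ and $\mathbf D$ along the bijection $\alpha$ (objects of $O_{\mathbf C}$ identified with their images); its generators are the pushout of the generators of $\mathbf C$ and of $\mathbf D$ along $\beta$; its relations are all relations of $\mathbf C$ and all relations of $\mathbf D$. *)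

(* Defs.v *)
From Stdlib Require Import List Relations ClassicalEpsilon.
Import ListNotations.
Set Implicit Arguments.

Record presentation := Presentation {
  Ob : Type;
  Gen : Type;
  gsrc : Gen -> Ob;
  gtgt : Gen -> Ob;
  Rel : Type;
  rsrc : Rel -> Ob;
  rtgt : Rel -> Ob;
  rlhs : Rel -> list Gen;
  rrhs : Rel -> list Gen
}.

(* [valid P a l b]: the list of generators [l] (in diagrammatic order) is a
   composable path from [a] to [b]; the empty list is the identity at a. *)
Fixpoint valid (P : presentation) (a : Ob P) (l : list (Gen P)) (b : Ob P) : Prop :=
  match l with
  | [] => a = b
  | g :: l' => gsrc P g = a /\ valid P (gtgt P g) l' b
  end.

Definition wf_presentation (P : presentation) : Prop :=
  forall r : Rel P, valid P (rsrc P r) (rlhs P r) (rtgt P r)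
                 /\ valid P (rsrc P r) (rrhs P r) (rtgt P r).

Inductive step (P : presentation) (a b : Ob P) : list (Gen P) -> list (Gen P) -> Prop :=
| step_intro : forall (r : Rel P) (p q : list (Gen P)),
    valid P a p (rsrc P r) -> valid P (rtgt P r) q b ->
    valid P (rsrc P r) (rlhs P r) (rtgt P r) ->
    valid P (rsrc P r) (rrhs P r) (rtgt P r) ->
    step P a b (p ++ rlhs P r ++ q) (p ++ rrhs P r ++ q).

Definition congruent (P : presentation) (a b : Ob P) : relation (list (Gen P)) :=
  clos_refl_sym_trans _ (step P a b).

(* Morphisms a -> b of the presented category are the valid paths a -> b
   modulo [congruent P a b].  A clique: nonempty object set and exactly one
   morphism between each ordered pair of objects. *)
Definition is_clique (P : presentation) : Prop :=
  inhabited (Ob P) /\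
  forall a b : Ob P,
    (exists l, valid P a l b) /\
    (forall l1 l2, valid P a l1 b -> valid P a l2 b -> congruent P a b l1 l2).

(* The subcategory with objects OD generated by GD is full in D: every morphism
   between objects of OD is (the class of) a composite of generators in GD. *)
Definition generated_sub_full (D : presentation) (OD : Ob D -> Prop)
    (GD : Gen D -> Prop) : Prop :=
  forall a b : Ob D, OD a -> OD b -> forall l, valid D a l b ->
    exists l', Forall GD l' /\ valid D a l' b /\ congruent D a b l l'.

Section Glue.
Variables (C D : presentation) (OC : Ob C -> Prop) (GC : Gen C -> Prop)
          (alpha : Ob C -> Ob D) (beta : Gen C -> Gen D).

(* Pushout of the object sets along the bijection alpha : OC -> OD, with
   canonical representatives: objects of C outside OC, plus all objects of D
   (an x in OC is identified with alpha x). *)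
Definition GOb : Type := ({x : Ob C | ~ OC x} + Ob D)%type.
Definition iOb (x : Ob C) : GOb :=
  match excluded_middle_informative (OC x) with
  | left _ => inr (alpha x)
  | right h => inl (exist _ x h)
  end.

(* Pushout of the generator sets along beta : GC -> GD, likewise. *)
Definition GGen : Type := ({g : Gen C | ~ GC g} + Gen D)%type.
Definition iGen (g : Gen C) : GGen :=
  match excluded_middle_informative (GC g) with
  | left _ => inr (beta g)
  | right h => inl (exist _ g h)
  end.

Definition GGsrc (g : GGen) : GOb :=
  match g with inl g' => iOb (gsrc C (proj1_sig g')) | inr h => inr (gsrc D h) end.
Definition GGtgt (g : GGen) : GOb :=
  match g with inl g' => iOb (gtgt C (proj1_sig g')) | inr h => inr (gtgt D h) end.

Definition GRel : Type := (Rel C + Rel D)%type.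
Definition GRsrc (r : GRel) : GOb :=
  match r with inl r' => iOb (rsrc C r') | inr r' => inr (rsrc D r') end.
Definition GRtgt (r : GRel) : GOb :=
  match r with inl r' => iOb (rtgt C r') | inr r' => inr (rtgt D r') end.
Definition GRlhs (r : GRel) : list GGen :=
  match r with inl r' => map iGen (rlhs C r') | inr r' => map inr (rlhs D r') end.
Definition GRrhs (r : GRel) : list GGen :=
  match r with inl r' => map iGen (rrhs C r') | inr r' => map inr (rrhs D r') end.

Definition Gpres : presentation :=
  Presentation GGsrc GGtgt GRsrc GRtgt GRlhs GRrhs.
End Glue.

(* Main.v *)
Require Import Defs.
From Stdlib Require Import List Relations ClassicalEpsilon ProofIrrelevance.
Import ListNotations.

Lemma valid_app (P : presentation) : forall l1 a m l2 b,
  valid P a l1 m -> valid P m l2 b -> valid P a (l1 ++ l2) b.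
Proof.
  induction l1; simpl; intros. subst; auto.
  destruct H; split; eauto.
Qed.

Lemma lift_valid (P Q : presentation) (fo : Ob P -> Ob Q) (fg : Gen P -> Gen Q)
  (Hs : forall g, gsrc Q (fg g) = fo (gsrc P g))
  (Ht : forall g, gtgt Q (fg g) = fo (gtgt P g)) :
  forall l a b, valid P a l b -> valid Q (fo a) (map fg l) (fo b).
Proof.
  induction l; simpl; intros. subst; auto.
  destruct H; split. rewrite Hs; congruence. rewrite Ht; auto.
Qed.

Lemma lift_cong (P Q : presentation) (fo : Ob P -> Ob Q) (fg : Gen P -> Gen Q)
  (fr : Rel P -> Rel Q)
  (Hs : forall g, gsrc Q (fg g) = fo (gsrc P g))
  (Ht : forall g, gtgt Q (fg g) = fo (gtgt P g))
  (Hrs : forall r, rsrc Q (fr r) = fo (rsrc P r))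
  (Hrt : forall r, rtgt Q (fr r) = fo (rtgt P r))
  (Hl : forall r, rlhs Q (fr r) = map fg (rlhs P r))
  (Hr : forall r, rrhs Q (fr r) = map fg (rrhs P r)) :
  forall a b l1 l2, congruent P a b l1 l2 ->
    congruent Q (fo a) (fo b) (map fg l1) (map fg l2).
Proof.
  intros a b l1 l2 H. induction H.
  - destruct H. rewrite !map_app, <- Hl, <- Hr. apply rst_step.
    apply step_intro.
    + rewrite Hrs. eapply lift_valid; eauto.
    + rewrite Hrt. eapply lift_valid; eauto.
    + rewrite Hrs, Hrt, Hl. eapply lift_valid; eauto.
    + rewrite Hrs, Hrt, Hr. eapply lift_valid; eauto.
  - apply rst_refl.
  - apply rst_sym; auto.
  - eapply rst_trans; eauto.
Qed.

Lemma cong_app_r (P : presentation) a m b q : forall l l',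
  congruent P a m l l' -> valid P m q b -> congruent P a b (l ++ q) (l' ++ q).
Proof.
  intros l l' H Hq. induction H.
  - destruct H. rewrite <- !app_assoc. apply rst_step. apply step_intro; auto.
    eapply valid_app; eauto.
  - apply rst_refl.
  - apply rst_sym; auto.
  - eapply rst_trans; eauto.
Qed.

Lemma cong_cons (P : presentation) (g : Gen P) a t b : forall l l',
  gsrc P g = a -> gtgt P g = t ->
  congruent P t b l l' -> congruent P a b (g :: l) (g :: l').
Proof.
  intros l l' Hs Ht H. induction H.
  - destruct H. apply rst_step.
    change (g :: p ++ rlhs P r ++ q) with ((g :: p) ++ rlhs P r ++ q).
    change (g :: p ++ rrhs P r ++ q) with ((g :: p) ++ rrhs P r ++ q).
    apply step_intro; auto. simpl; split; auto. congruence.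
  - apply rst_refl.
  - apply rst_sym; auto.
  - eapply rst_trans; eauto.
Qed.

Theorem mainTheorem19
  (C D : presentation)
  (wfC : wf_presentation C) (wfD : wf_presentation D)
  (cliqueC : is_clique C) (cliqueD : is_clique D)
  (OC : Ob C -> Prop) (GC : Gen C -> Prop)
  (OD : Ob D -> Prop) (GD : Gen D -> Prop)
  (OC_ne : exists x, OC x)
  (GC_in : forall g, GC g -> OC (gsrc C g) /\ OC (gtgt C g))
  (GD_in : forall h, GD h -> OD (gsrc D h) /\ OD (gtgt D h))
  (alpha : Ob C -> Ob D) (beta : Gen C -> Gen D)
  (alpha_maps : forall x, OC x -> OD (alpha x))
  (alpha_inj : forall x y, OC x -> OC y -> alpha x = alpha y -> x = y)
  (alpha_surj : forall y, OD y -> exists x, OC x /\ alpha x = y)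
  (beta_maps : forall g, GC g -> GD (beta g))
  (beta_inj : forall g g', GC g -> GC g' -> beta g = beta g' -> g = g')
  (beta_surj : forall h, GD h -> exists g, GC g /\ beta g = h)
  (compat : forall g, GC g ->
     gsrc D (beta g) = alpha (gsrc C g) /\ gtgt D (beta g) = alpha (gtgt C g))
  (full : generated_sub_full D OD GD) :
  is_clique (Gpres C D OC GC alpha beta).
Proof.
  destruct (constructive_indefinite_description _ OC_ne) as [x0 Hx0].
  assert (Cp : forall x y, {l | valid C x l y}).
  { intros; apply constructive_indefinite_description; apply (proj2 cliqueC). }
  assert (Dp : forall x y, {l | valid D x l y}).
  { intros; apply constructive_indefinite_description; apply (proj2 cliqueD). }
  set (G := Gpres C D OC GC alpha beta).
  set (d0 := alpha x0).
  assert (HiOb_OC : forall x, OC x -> iOb C D OC alpha x = inr (alpha x)).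
  { intros x Hx; unfold iOb; destruct excluded_middle_informative; [reflexivity | contradiction]. }
  assert (iOb_inl : forall x (n : ~ OC x), iOb C D OC alpha x = inl (exist _ x n)).
  { intros x n; unfold iOb; destruct excluded_middle_informative; [contradiction|].
    f_equal; f_equal; apply proof_irrelevance. }
  assert (iGen_GC : forall g, GC g -> iGen C D GC beta g = inr (beta g)).
  { intros x Hx; unfold iGen; destruct excluded_middle_informative; [reflexivity | contradiction]. }
  assert (iGen_inl : forall x (n : ~ GC x), iGen C D GC beta x = inl (exist _ x n)).
  { intros x n; unfold iGen; destruct excluded_middle_informative; [contradiction|].
    f_equal; f_equal; apply proof_irrelevance. }
  assert (HiOb_x0 : iOb C D OC alpha x0 = inr d0) by (apply HiOb_OC; auto).
  assert (Hs : forall g, gsrc G (iGen C D GC beta g) = iOb C D OC alpha (gsrc C g)).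
  { intros g; simpl; unfold iGen; destruct excluded_middle_informative; simpl.
    - rewrite (proj1 (compat g g0)), HiOb_OC; [reflexivity | apply GC_in; auto].
    - reflexivity. }
  assert (Ht : forall g, gtgt G (iGen C D GC beta g) = iOb C D OC alpha (gtgt C g)).
  { intros g; simpl; unfold iGen; destruct excluded_middle_informative; simpl.
    - rewrite (proj2 (compat g g0)), HiOb_OC; [reflexivity | apply GC_in; auto].
    - reflexivity. }
  pose proof (lift_valid C G (iOb C D OC alpha) (iGen C D GC beta) Hs Ht) as validC.
  pose proof (lift_cong C G (iOb C D OC alpha) (iGen C D GC beta) inl Hs Ht
     (fun _ => eq_refl) (fun _ => eq_refl) (fun _ => eq_refl) (fun _ => eq_refl)) as congC.
  pose proof (lift_valid D G inr inr (fun _ => eq_refl) (fun _ => eq_refl)) as validD.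
  pose proof (lift_cong D G inr inr inr (fun _ => eq_refl) (fun _ => eq_refl)
     (fun _ => eq_refl) (fun _ => eq_refl) (fun _ => eq_refl) (fun _ => eq_refl)) as congD.
  pose (out := fun o : Ob G => match o with
     | inl x => map (iGen C D GC beta) (proj1_sig (Cp (proj1_sig x) x0))
     | inr d => map inr (proj1_sig (Dp d d0)) end : list (Gen G)).
  pose (inn := fun o : Ob G => match o with
     | inl x => map (iGen C D GC beta) (proj1_sig (Cp x0 (proj1_sig x)))
     | inr d => map inr (proj1_sig (Dp d0 d)) end : list (Gen G)).
  assert (out_valid : forall o, valid G o (out o) (inr d0)).
  { intros [[x n]|d]; unfold out.
    - pose proof (validC _ _ _ (proj2_sig (Cp x x0))) as H.
      rewrite (iOb_inl x n), HiOb_x0 in H. exact H.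
    - exact (validD _ _ _ (proj2_sig (Dp d d0))). }
  assert (inn_valid : forall o, valid G (inr d0) (inn o) o).
  { intros [[x n]|d]; unfold inn.
    - pose proof (validC _ _ _ (proj2_sig (Cp x0 x))) as H.
      rewrite (iOb_inl x n), HiOb_x0 in H. exact H.
    - exact (validD _ _ _ (proj2_sig (Dp d0 d))). }
  assert (pull : forall l' a b, Forall GD l' -> OC a -> OC b ->
     valid D (alpha a) l' (alpha b) ->
     exists lc, valid C a lc b /\ map (iGen C D GC beta) lc = map inr l').
  { induction l' as [|h l' IH]; intros a b HF Ha Hb Hv.
    - simpl in Hv. exists []. split; [simpl; apply alpha_inj; auto | reflexivity].
    - inversion HF; subst. destruct (beta_surj h H1) as [g [Hg Hbg]]. subst h.
      destruct Hv as [Hsrc Hv]. destruct (compat g Hg) as [c1 c2].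
      destruct (GC_in g Hg) as [g1 g2]. rewrite c2 in Hv.
      destruct (IH (gtgt C g) b H2 g2 Hb Hv) as [lc [Hv' Hm]].
      exists (g :: lc). split.
      + simpl; split; auto. apply alpha_inj; auto; congruence.
      + simpl; rewrite iGen_GC, Hm; auto. }
  assert (E : forall s c, valid C s c x0 ->
     congruent G (iOb C D OC alpha s) (inr d0) (out (iOb C D OC alpha s))
        (map (iGen C D GC beta) c)).
  { intros s c Hc. destruct (excluded_middle_informative (OC s)) as [Hs0|Hn].
    - rewrite (HiOb_OC s Hs0). unfold out.
      destruct (full (alpha s) d0 (alpha_maps _ Hs0) (alpha_maps _ Hx0) _
          (proj2_sig (Dp (alpha s) d0))) as [l' [HF [Hv' Hcg]]].
      destruct (pull l' s x0 HF Hs0 Hx0 Hv') as [lc [Hvc Hm]].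
      eapply rst_trans. apply (congD _ _ _ _ Hcg).
      pose proof (congC _ _ _ _ (proj2 (proj2 cliqueC s x0) lc c Hvc Hc)) as K.
      rewrite (HiOb_OC s Hs0), HiOb_x0 in K.
      exact (@eq_ind (list (Gen G)) _ (fun z : list (Gen G) => congruent G _ _ z _) K _ Hm).
    - rewrite (iOb_inl s Hn). unfold out. simpl proj1_sig.
      rewrite <- (iOb_inl s Hn), <- HiOb_x0. apply congC.
      apply (proj2 cliqueC); auto. apply (proj2_sig (Cp s x0)). }
  assert (Main : forall l a b, valid G a l b -> congruent G a b l (out a ++ inn b)).
  { induction l as [|g l IH]; intros a b Hv.
    - simpl in Hv; subst b. destruct a as [[x n]|d]; unfold out, inn.
      + rewrite <- map_app. rewrite <- (iOb_inl x n). apply (congC x x []).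
        apply (proj2 cliqueC). simpl; reflexivity.
        eapply valid_app; [apply (proj2_sig (Cp x x0)) | apply (proj2_sig (Cp x0 x))].
      + rewrite <- map_app. apply (congD d d []). apply (proj2 cliqueD). simpl; reflexivity.
        eapply valid_app; [apply (proj2_sig (Dp d d0)) | apply (proj2_sig (Dp d0 d))].
    - destruct Hv as [Hsrc Hv]. specialize (IH _ _ Hv).
      eapply rst_trans. apply (cong_cons G g a (gtgt G g)); [exact Hsrc | reflexivity | exact IH].
      change (g :: out (gtgt G g) ++ inn b) with ((g :: out (gtgt G g)) ++ inn b).
      apply cong_app_r with (m := inr d0); [| apply inn_valid].
      destruct g as [[g0 n]|h].
      + simpl in Hsrc. subst a.
        eapply rst_trans. apply (cong_cons G _ _ (iOb C D OC alpha (gtgt C g0)));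
          [reflexivity | reflexivity |].
        apply E with (c := proj1_sig (Cp (gtgt C g0) x0)). apply (proj2_sig (Cp _ _)).
        rewrite <- (iGen_inl g0 n).
        change (iGen C D GC beta g0 :: map (iGen C D GC beta) (proj1_sig (Cp (gtgt C g0) x0)))
          with (map (iGen C D GC beta) (g0 :: proj1_sig (Cp (gtgt C g0) x0))).
        apply rst_sym. apply E. simpl; split; auto. apply (proj2_sig (Cp _ _)).
      + simpl in Hsrc. subst a. simpl gtgt. unfold out.
        change (inr h :: map inr (proj1_sig (Dp (gtgt D h) d0)))
          with (map (@inr {g : Gen C | ~ GC g} (Gen D)) (h :: proj1_sig (Dp (gtgt D h) d0))).
        apply congD. apply (proj2 cliqueD). simpl; split; auto. apply (proj2_sig (Dp _ _)).
        apply (proj2_sig (Dp _ _)). }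
  split.
  - constructor. exact (inr d0).
  - intros a b. split.
    + exists (out a ++ inn b). eapply valid_app; [apply out_valid | apply inn_valid].
    + intros l1 l2 H1 H2. eapply rst_trans; [apply Main; eauto | apply rst_sym, Main; auto].
Qed.
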